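(* The wall $W$ has a $2$-queue layout (with respect to a linear order of $V(W)$) such that for all edges $pq$ and $pr$ with $p\prec q\prec r$ or $r\prec q\prec p$, the edges $pq$ and $pr$ are in distinct queues.
   Context: The wall is the infinite graph $W$ with vertex set $\mathbb{Z}^2$ and edge set $\{(x,y)(x+1,y): x,y\in\mathbb{Z}\}\cup\{(x,y)(x,y+1): x,y\in\mathbb{Z},\ x+y\text{ even}\}$. A $k$-queue layout of a graph consists of a linear order $\preceq$ of its vertex set and a partition of its edge set into $k$ parts (queues) such that no two edges in the same queue nest, i.e. there are no edges $ab$ and $cd$ in the same queue with $a\prec c\prec d\prec b$. *)

(* Defs.v *)
From Stdlib Require Import ZArith Arith.
Open Scope Z_scope.

Definition vtx := (Z * Z)%type.

Definition wall_horiz (u v : vtx) : Prop :=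
  fst v = fst u + 1 /\ snd v = snd u.

Definition wall_vert (u v : vtx) : Prop :=
  fst v = fst u /\ snd v = snd u + 1 /\ Z.Even (fst u + snd u).

Definition wall_adj (u v : vtx) : Prop :=
  wall_horiz u v \/ wall_horiz v u \/ wall_vert u v \/ wall_vert v u.

Definition strict_linear_order {V : Type} (lt : V -> V -> Prop) : Prop :=
  (forall x, ~ lt x x) /\
  (forall x y z, lt x y -> lt y z -> lt x z) /\
  (forall x y, x <> y -> lt x y \/ lt y x).

(* A k-queue layout of the graph (V, adj) w.r.t. the linear order lt:
   q assigns to each edge uv (viewed as unordered: q u v = q v u) a queue
   index in {0,..,k-1}; no two edges in the same queue nest. *)
Definition queue_layout {V : Type} (adj : V -> V -> Prop) (k : nat)
  (lt : V -> V -> Prop) (q : V -> V -> nat) : Prop :=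
  strict_linear_order lt /\
  (forall u v, adj u v -> (q u v < k)%nat /\ q u v = q v u) /\
  (forall a b c d, adj a b -> adj c d -> lt a c -> lt c d -> lt d b ->
     q a b <> q c d).

(* Main.v *)
Require Import Defs.
From Stdlib Require Import ZArith Arith Lia.

Definition lexlt (u v : vtx) : Prop :=
  snd u < snd v \/ (snd u = snd v /\ fst u < fst v).

Definition qq (u v : vtx) : nat :=
  if Z.eq_dec (snd u) (snd v) then 0%nat else 1%nat.

Ltac unf := unfold wall_adj, wall_horiz, wall_vert, lexlt, qq, Z.Even in *.

Theorem lemma12 :
  exists (lt : vtx -> vtx -> Prop) (qa : vtx -> vtx -> nat),
    queue_layout wall_adj 2 lt qa /\
    (forall p q r : vtx, wall_adj p q -> wall_adj p r ->
       ((lt p q /\ lt q r) \/ (lt r q /\ lt q p)) ->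
       qa p q <> qa p r).
Proof.
  exists lexlt, qq. split; [split; [|split]|].
  - split; [|split].
    + intros [x y]; unf; simpl; lia.
    + intros [x1 y1] [x2 y2] [x3 y3]; unf; simpl; lia.
    + intros [x1 y1] [x2 y2] H; unf; simpl.
      destruct (Z.eq_dec x1 x2); destruct (Z.eq_dec y1 y2); subst; try congruence; lia.
  - intros [x1 y1] [x2 y2] H; unf; simpl in *.
    destruct (Z.eq_dec y1 y2); destruct (Z.eq_dec y2 y1); split; try lia.
  - intros [xa ya] [xb yb] [xc yc] [xd yd] Hab Hcd H1 H2 H3; unf; simpl in *.
    destruct (Z.eq_dec ya yb); destruct (Z.eq_dec yc yd); try (intro; discriminate);
    intros _; lia.
  - intros [xp yp] [xq yq] [xr yr] Hq Hr H; unf; simpl in *.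
    destruct (Z.eq_dec yp yq); destruct (Z.eq_dec yp yr); try (intro; discriminate);
    intros _;
    destruct Hq as [Hq|[Hq|[Hq|Hq]]]; destruct Hr as [Hr|[Hr|[Hr|Hr]]];
    repeat match goal with H : _ /\ _ |- _ => destruct H end;
    repeat match goal with H : exists _, _ |- _ => destruct H end;
    lia.
Qed.
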